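(* Let $\mathcal G=((V,E),(V_1,V_2,V_\Diamond),\delta,w)$ be a stochastic game and let $\mathsf r$ be a real vector indexed by $V$ that satisfies the Bellman condition, with classes $C_1,\dots,C_k$. Let $i\in\{1,2\}$ and suppose Player $i$ follows a strategy such that, each time the token is on a vertex $v\in V_i$, the chosen successor lies in the same class as $v$. Then, for every initial vertex and every strategy of the other player, with probability $1$ the token eventually reaches a class $C_j$ (for some $1\le j\le k$) which it never leaves afterwards.
   Context: A stochastic game is $\mathcal{G}=((V,E),(V_1,V_2,V_\Diamond),\delta,w)$: a finite directed graph $(V,E)$ in which every vertex $v$ has a nonempty out-neighbour set $E(v)$, a partition of $V$ into Player 1, Player 2 and probabilistic vertices, a function $\delta$ giving each $v\in V_\Diamond$ a probability distribution $\delta(v)$ on $E(v)$, positive on every out-neighbour, and payoffs $w:E\to\mathbb{Q}$. The game proceeds by moving a token: from $v\in V_i$ Player $i$ chooses a successor, from $v\in V_\Diamond$ the successor $v'$ is chosen with probability $\delta(v)(v')$. Strategies are (deterministic) functions from finite histories ending in $V_i$ to successors; a strategy pair and initial vertex induce a probability measure on plays. For a real vector $\mathsf r=(r_v)_{v\in V}$, its classes $C_1,\dots,C_k$ are the maximal nonempty sets of vertices on which $\mathsf r$ is constant. $\mathsf r$ satisfies the Bellman condition if for every $v$: $r_v=\max_{v'\in E(v)}r_{v'}$ if $v\in V_1$, $r_v=\min_{v'\in E(v)}r_{v'}$ if $v\in V_2$, $r_v=\sum_{v'\in E(v)}\delta(v)(v')r_{v'}$ if $v\in V_\Diamond$. 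*)

(* Defs.v *)
From HB Require Import structures.
From mathcomp Require Import all_boot all_order all_algebra.
From mathcomp Require Import all_classical all_reals all_analysis.
Set Implicit Arguments. Unset Strict Implicit. Unset Printing Implicit Defensive.
Import Order.TTheory GRing.Theory Num.Theory.
Local Open Scope classical_set_scope.
Local Open Scope ring_scope.

Inductive owner_t := Player1 | Player2 | Random.

Record stoch_game (R : realType) (V : finType) := StochGame {
  edges : V -> {set V};
  owner : V -> owner_t;          (* the partition (V_1, V_2, V_Diamond) *)
  delta : V -> V -> R;           (* delta(v)(v') for v in V_Diamond *)
  payoff : V -> V -> rat         (* w : E -> Q (irrelevant here) *)
}.

Definition wf_game (R : realType) (V : finType) (G : stoch_game R V) : Prop :=
  (forall v, (0 < #|edges G v|)%N) /\
  (forall v, owner G v = Random ->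
     (forall v', v' \in edges G v -> 0 < delta G v v') /\
     (forall v', v' \notin edges G v -> delta G v v' = 0) /\
     \sum_(v' in edges G v) delta G v v' = 1).

Definition bellman (R : realType) (V : finType) (G : stoch_game R V)
  (r : V -> R) : Prop :=
  forall v,
    match owner G v with
    | Player1 => (forall v', v' \in edges G v -> r v' <= r v) /\
                 (exists2 v', v' \in edges G v & r v' = r v)
    | Player2 => (forall v', v' \in edges G v -> r v <= r v') /\
                 (exists2 v', v' \in edges G v & r v' = r v)
    | Random => r v = \sum_(v' in edges G v) delta G v v' * r v'
    end.

Definition rclass (R : realType) (V : finType) (r : V -> R) (v : V) : {set V} :=
  [set u | r u == r v].
Definition classes (R : realType) (V : finType) (r : V -> R) : {set {set V}} :=
  [set rclass r v | v : V].

(* A (deterministic) strategy: given the history h of previously visited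
   vertices and the current vertex v, it returns a successor.  The full
   history is h ++ [:: v]. *)
Definition strategy (V : finType) := seq V -> V -> V.

Definition valid_strategy (R : realType) (V : finType) (G : stoch_game R V)
  (i : owner_t) (s : strategy V) : Prop :=
  forall h v, owner G v = i -> s h v \in edges G v.

Definition class_preserving (R : realType) (V : finType) (G : stoch_game R V)
  (r : V -> R) (i : owner_t) (s : strategy V) : Prop :=
  forall h v, owner G v = i -> s h v \in rclass r v.

Definition trans (R : realType) (V : finType) (G : stoch_game R V)
  (s1 s2 : strategy V) (h : seq V) (v v' : V) : R :=
  match owner G v with
  | Player1 => (s1 h v == v')%:R
  | Player2 => (s2 h v == v')%:R
  | Random => delta G v v'
  end.

Fixpoint path_prob (R : realType) (V : finType) (G : stoch_game R V)
  (s1 s2 : strategy V) (h : seq V) (v : V) (rest : seq V) : R :=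
  match rest with
  | [::] => 1
  | y :: rest' => trans G s1 s2 h v y * path_prob G s1 s2 (rcons h v) y rest'
  end.

Definition prefix_prob (R : realType) (V : finType) (G : stoch_game R V)
  (s1 s2 : strategy V) (v0 : V) (p : seq V) : R :=
  match p with
  | [::] => 1
  | x :: rest => (x == v0)%:R * path_prob G s1 s2 [::] x rest
  end.

(* The type is indexed by the initial vertex v0 only to provide a default
   element (the constant play), which the measurable-type structure needs. *)
Definition plays (V : finType) (v0 : V) := nat -> V.
HB.instance Definition _ (V : finType) (v0 : V) := Choice.on (plays v0).
HB.instance Definition _ (V : finType) (v0 : V) :=
  isPointed.Build (plays v0) (fun _ => v0).
Definition cylinder (V : finType) (v0 : V) (p : seq V) : set (plays v0) :=
  [set f | mkseq f (size p) = p].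
Definition cylinders (V : finType) (v0 : V) : set (set (plays v0)) :=
  [set @cylinder V v0 p | p in [set: seq V]].
Definition play (V : finType) (v0 : V) := g_sigma_algebraType (@cylinders V v0).

(* P is the probability measure on plays induced by the strategy pair
   (s1, s2) and initial vertex v0: it is determined by its values on
   cylinders. *)
Definition induced_measure (R : realType) (V : finType) (G : stoch_game R V)
  (s1 s2 : strategy V) (v0 : V) (P : probability (play v0) R) : Prop :=
  forall p : seq V, P (@cylinder V v0 p) = (prefix_prob G s1 s2 v0 p)%:E.

Definition eventually_trapped (R : realType) (V : finType) (v0 : V)
  (r : V -> R) : set (play v0) :=
  [set f | exists2 C, C \in classes r &
            exists n, forall m, (n <= m)%N -> f m \in C].

Arguments cylinder {V} v0 p.
Arguments cylinders {V} v0.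
Arguments play {V} v0.
Arguments induced_measure {R V} G s1 s2 v0 P.
Arguments eventually_trapped {R V} v0 r.

(* Main.v *)
Require Import Defs.
From HB Require Import structures.
From mathcomp Require Import all_boot all_order all_algebra.
From mathcomp Require Import all_classical all_reals all_analysis.
From mathcomp Require Import ring lra.
Import Order.TTheory GRing.Theory Num.Theory.
Local Open Scope classical_set_scope.
Local Open Scope ring_scope.

Fixpoint seqs (V : finType) (n : nat) : seq (seq V) :=
  if n is n'.+1 then [seq x :: q | x <- enum V, q <- seqs V n'] else [:: [::]].

Lemma mem_seqs (V : finType) n (p : seq V) : (p \in seqs V n) = (size p == n).
Proof.
elim: n p => [|n IH] [|x p] //=.
- by apply/negbTE/allpairsPdep => -[y [q [_ _ //]]].
- apply/allpairsPdep/idP.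
    by case=> y [q [_]]; rewrite IH => /eqP <- [_ ->].
  by rewrite eqSS -IH => Hp; exists x, p; rewrite mem_enum.
Qed.

Lemma uniq_seqs (V : finType) n : uniq (seqs V n).
Proof.
elim: n => [|n IH] //=.
apply: allpairs_uniq => //; first exact: enum_uniq.
by move=> [a b] [c d] _ _ /= [-> ->].
Qed.

Section Game.
Variables (R : realType) (V : finType) (G : stoch_game R V) (s1 s2 : strategy V).
Hypothesis HG : wf_game G.
Hypothesis Hs1 : valid_strategy G Player1 s1.
Hypothesis Hs2 : valid_strategy G Player2 s2.

Definition W (h : seq V) (v : V) n (F : seq V -> R) :=
  \sum_(q <- seqs V n) path_prob G s1 s2 h v q * F q.

Lemma W_S h v n F : W h v n.+1 F =
  \sum_(y <- enum V) trans G s1 s2 h v y * W (rcons h v) y n (fun q => F (y :: q)).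
Proof.
rewrite /W /= big_allpairs_dep /=; apply: eq_bigr => y _.
by rewrite big_distrr; apply: eq_bigr => q _ /=; rewrite mulrA.
Qed.

Lemma trans_ge0 h v y : 0 <= trans G s1 s2 h v y.
Proof.
rewrite /trans; case E: (owner G v); [exact: ler0n | exact: ler0n |].
have [Hp [Hz _]] := HG.2 v E.
case: (boolP (y \in edges G v)) => Hy; first exact: ltW (Hp _ Hy).
by rewrite Hz.
Qed.

Lemma sum_eq1 (a : V) : \sum_(y <- enum V) ((a == y)%:R : R) = 1.
Proof.
rewrite (bigD1_seq a) ?mem_enum ?enum_uniq //= eqxx big1 ?addr0 //.
by move=> y /negbTE; rewrite eq_sym => ->.
Qed.

Lemma trans_sum1 h v : \sum_(y <- enum V) trans G s1 s2 h v y = 1.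
Proof.
rewrite /trans; case E: (owner G v); try exact: sum_eq1.
have [Hp [Hz H1]] := HG.2 v E.
rewrite big_enum /= (bigID (fun y => y \in edges G v)) /= -[RHS]addr0 H1; congr (_ + _).
by apply: big1 => y Hy; rewrite Hz.
Qed.

Lemma path_prob_ge0 h v q : 0 <= path_prob G s1 s2 h v q.
Proof.
elim: q h v => [|y q IH] h v /=; first exact: ler01.
by rewrite mulr_ge0 // trans_ge0.
Qed.

Lemma W1 h v n : W h v n (fun _ => 1) = 1.
Proof.
elim: n h v => [|n IH] h v; first by rewrite /W /= big_seq1 mulr1.
rewrite W_S -[RHS](trans_sum1 h v); apply: eq_bigr => y _.
by rewrite IH mulr1.
Qed.

Lemma W_le h v n F1 F2 : (forall q, F1 q <= F2 q) -> W h v n F1 <= W h v n F2.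
Proof.
move=> H; apply: ler_sum => q _; by rewrite ler_wpM2l ?path_prob_ge0.
Qed.

Lemma W_add h v n F1 F2 : W h v n (fun q => F1 q + F2 q) = W h v n F1 + W h v n F2.
Proof. by rewrite /W -big_split; apply: eq_bigr => q _; rewrite mulrDr. Qed.

Lemma W_scale h v n c F : W h v n (fun q => c * F q) = c * W h v n F.
Proof. by rewrite /W big_distrr; apply: eq_bigr => q _; rewrite mulrCA. Qed.

Lemma W_const h v n c : W h v n (fun _ => c) = c.
Proof.
transitivity (W h v n (fun _ => 1) * c); last by rewrite W1 mul1r.
by rewrite /W big_distrl; apply: eq_bigr => q _; rewrite mulr1.
Qed.

Lemma W_ext h v n F1 F2 : (forall q, F1 q = F2 q) -> W h v n F1 = W h v n F2.
Proof. by move=> H; apply: eq_bigr => q _; rewrite H. Qed.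

Fixpoint Bs (r : V -> R) (v : V) (q : seq V) : nat :=
  if q is y :: q' then ((r y != r v) + Bs r y q')%N else 0%N.

Lemma core (r Y : V -> R) (g2 : R)
  (Hstep : forall h v, 0 <= \sum_(y <- enum V)
      trans G s1 s2 h v y * (Y y - Y v - g2 * (r y != r v)%:R)) n h v :
  0 <= W h v n (fun q => Y (last v q) - Y v - g2 * (Bs r v q)%:R).
Proof.
elim: n h v => [|n IH] h v.
  by rewrite /W /= big_seq1 /= subrr mulr0 subr0 mulr0.
rewrite W_S; apply: le_trans (Hstep h v) _; apply: ler_sum => y _.
rewrite ler_wpM2l ?trans_ge0 //.
rewrite (@W_ext _ _ _ _ (fun q => (Y (last y q) - Y y - g2 * (Bs r y q)%:R)
   + (Y y - Y v - g2 * (r y != r v)%:R))); last first.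
  by move=> q /=; rewrite natrD mulrDr; ring.
by rewrite W_add W_const lerDr IH.
Qed.

Lemma sum_det (a : V) (F : V -> R) : \sum_(y <- enum V) (a == y)%:R * F y = F a.
Proof.
rewrite (bigD1_seq a) ?mem_enum ?enum_uniq //= eqxx mul1r big1 ?addr0 //.
by move=> y /negbTE; rewrite eq_sym => ->; rewrite mul0r.
Qed.

Lemma sq_diff (a b c : R) : (b - c)^+2 - (a - c)^+2 = (b - a)^+2 + 2 * ((a - c) * (b - a)).
Proof. by ring. Qed.

Lemma step (r : V -> R) (Hr : bellman G r) (c : R)
  (Hc : forall h v, (owner G v = Player1 -> 0 <= (r v - c) * (r (s1 h v) - r v)) /\
                    (owner G v = Player2 -> 0 <= (r v - c) * (r (s2 h v) - r v)))
  (g2 : R) (Hg : forall a b, g2 * (r b != r a)%:R <= (r b - r a)^+2) h v :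
  0 <= \sum_(y <- enum V) trans G s1 s2 h v y *
        ((r y - c)^+2 - (r v - c)^+2 - g2 * (r y != r v)%:R).
Proof.
have [Hc1 Hc2] := Hc h v.
rewrite /trans; case E: (owner G v).
- rewrite sum_det; have := sq_diff (r v) (r (s1 h v)) c.
  have := Hg v (s1 h v); have := Hc1 E; nra.
- rewrite sum_det; have := sq_diff (r v) (r (s2 h v)) c.
  have := Hg v (s2 h v); have := Hc2 E; nra.
have [Hp [Hz H1]] := HG.2 v E.
have S1 : \sum_(y <- enum V) delta G v y = 1.
  by have := trans_sum1 h v; rewrite /trans E.
have S2 : \sum_(y <- enum V) delta G v y * r y = r v.
  have := Hr v; rewrite E => ->.
  rewrite big_enum /= (bigID (fun y => y \in edges G v)) /= -[RHS]addr0; congr (_ + _).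
  by apply: big1 => y Hy; rewrite Hz // mul0r.
rewrite (eq_bigr (fun y => delta G v y * ((r y - r v)^+2 - g2 * (r y != r v)%:R)
    + 2 * (r v - c) * (delta G v y * r y - delta G v y * r v))); last first.
  by move=> y _; have := sq_diff (r v) (r y) c; rewrite /GRing.exp /=; nra.
rewrite big_split /= -big_distrr /= sumrB S2 -big_distrl /= S1 mul1r subrr mulr0 addr0.
apply: sumr_ge0 => y _; apply: mulr_ge0; first by have := trans_ge0 h v y; rewrite /trans E.
by rewrite subr_ge0 (Hg v y).
Qed.

Lemma bound (r Y : V -> R) (g2 Yb : R)
  (Hstep : forall h v, 0 <= \sum_(y <- enum V)
      trans G s1 s2 h v y * (Y y - Y v - g2 * (r y != r v)%:R))
  (Hg2 : 0 < g2) (HY0 : forall v, 0 <= Y v) (HYb : forall v, Y v <= Yb) K h v n :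
  K%:R * W h v n (fun q => (K <= Bs r v q)%:R) <= Yb / g2.
Proof.
have H1 : K%:R * W h v n (fun q => (K <= Bs r v q)%:R) <= W h v n (fun q => (Bs r v q)%:R).
  rewrite -W_scale; apply: W_le => q; case: leqP => HK; last by rewrite mulr0.
  by rewrite mulr1 ler_nat.
apply: (le_trans H1); rewrite ler_pdivlMr // mulrC.
have := @core r Y g2 Hstep n h v.
rewrite (@W_ext _ _ _ _ (fun q => (Y (last v q) - Y v) + (- g2) * (Bs r v q)%:R)); last first.
  by move=> q; ring.
rewrite W_add W_scale mulNr subr_ge0 => /le_trans; apply.
rewrite -[X in _ <= X](W_const h v n); apply: W_le => q.
by have := HY0 v; have := HYb (last v q); lra.
Qed.

End Game.

Section Meas.
Variables (R : realType) (V : finType) (G : stoch_game R V) (s1 s2 : strategy V).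
Variables (v0 : V) (P : probability (play v0) R).
Hypothesis HP : induced_measure G s1 s2 v0 P.

Lemma cyl_meas p : measurable (cylinder v0 p : set (play v0)).
Proof. by apply: sub_sigma_algebra; exists p. Qed.

Definition Ev m (Q : pred (seq V)) (s : seq (seq V)) : set (play v0) :=
  [set f | (mkseq f m \in s) && Q (mkseq f m)].

Lemma list_event m Q s : uniq s -> all (fun p => size p == m) s ->
  measurable (Ev m Q s) /\
  P (Ev m Q s) = (\sum_(p <- s | Q p) prefix_prob G s1 s2 v0 p)%:E.
Proof.
elim: s => [|p s IH] /=.
  have -> : Ev m Q [::] = set0 by apply/seteqP; split => f //=.
  by rewrite big_nil measure0.
move=> /andP[Hp Hu] /andP[/eqP Hsz Ha].
have [Hm HPs] := IH Hu Ha.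
rewrite big_cons; case: (boolP (Q p)) => HQ; last first.
  have -> : Ev m Q (p :: s) = Ev m Q s; last by [].
  apply/seteqP; split => f; rewrite /Ev /mkset; cbv beta; rewrite in_cons.
    by case/andP => /orP[/eqP E|->] //; rewrite E (negbTE HQ).
  by case/andP => -> ->; rewrite orbT.
have -> : Ev m Q (p :: s) = cylinder v0 p `|` Ev m Q s.
  apply/seteqP; split => f; rewrite /Ev /cylinder /mkset; cbv beta; rewrite in_cons Hsz.
    by case/andP => /orP[/eqP E|Hs] H; [left | right; apply/andP].
  by case=> [E | /andP[-> ->]]; rewrite ?orbT // E eqxx HQ.
split; first exact: measurableU (cyl_meas p) Hm.
rewrite measureU //; first by rewrite EFinD; congr (_ + _); [exact: HP | exact: HPs].
  exact: cyl_meas.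
apply/seteqP; split => f //= [E /andP[Hs _]].
move: E Hs; rewrite /cylinder /mkset Hsz => ->; by rewrite (negbTE Hp).
Qed.

Lemma prefix_event m (Q : pred (seq V)) :
  measurable [set f : play v0 | Q (mkseq f m)] /\
  P [set f : play v0 | Q (mkseq f m)] =
    (\sum_(p <- seqs V m | Q p) prefix_prob G s1 s2 v0 p)%:E.
Proof.
have -> : [set f : play v0 | Q (mkseq f m)] = Ev m Q (seqs V m).
  apply/seteqP; split => f; rewrite /Ev /mkset; cbv beta;
    by rewrite mem_seqs size_mkseq eqxx.
apply: list_event; first exact: uniq_seqs.
by apply/allP => p; rewrite mem_seqs.
Qed.

Lemma prefix_sum N (Q : pred (seq V)) :
  \sum_(p <- seqs V N.+1 | Q p) prefix_prob G s1 s2 v0 p =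
  W R V G s1 s2 [::] v0 N (fun q => (Q (v0 :: q))%:R).
Proof.
rewrite big_mkcond /= big_allpairs_dep /=.
rewrite (bigD1_seq v0) ?mem_enum ?enum_uniq //= [X in _ + X]big1 ?addr0.
  by apply: eq_bigr => q _; rewrite eqxx mul1r; case: (Q _); rewrite ?mulr1 ?mulr0.
move=> x Hx; apply: big1 => q _; rewrite (negbTE Hx) mul0r; by case: (Q _).
Qed.

End Meas.

Lemma gap (R : realType) (V : finType) (r : V -> R) :
  exists2 g2 : R, 0 < g2 & forall a b, g2 * (r b != r a)%:R <= (r b - r a)^+2.
Proof.
exists (\big[Order.min/1]_(p : V * V | r p.2 != r p.1) (r p.2 - r p.1)^+2).
  elim/big_ind: _ => //[x y Hx Hy | p Hp]; first by rewrite lt_min Hx Hy.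
  by rewrite lt_def sqr_ge0 andbT sqrf_eq0 subr_eq0.
move=> a b; case: (boolP (r b != r a)) => H; last by rewrite mulr0 sqr_ge0.
by rewrite mulr1; exact: (@bigmin_le_cond _ _ _ _ (a, b)).
Qed.

Lemma lower_bound (R : realType) (V : finType) (r : V -> R) :
  exists c : R, forall v, c <= r v.
Proof.
exists (- \sum_(u : V) `|r u|) => v; rewrite lerNl.
apply: le_trans (ler_norm (- r v)) _; rewrite normrN.
by rewrite (bigD1 v) //= lerDl sumr_ge0.
Qed.

Lemma upper_bound (R : realType) (V : finType) (r : V -> R) :
  exists c : R, forall v, r v <= c.
Proof.
exists (\sum_(u : V) `|r u|) => v.
apply: le_trans (ler_norm _) _.
by rewrite (bigD1 v) //= lerDl sumr_ge0.
Qed.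

Lemma Ybound (R : realType) (V : finType) (Y : V -> R) :
  (forall v, 0 <= Y v) -> forall v, Y v <= \sum_(u : V) Y u.
Proof. by move=> H v; rewrite (bigD1 v) //= lerDl sumr_ge0. Qed.

Lemma Bs_shift (R : realType) (V : finType) (r : V -> R) (f : nat -> V) N s :
  Bs R V r (f s) [seq f i | i <- iota s.+1 N.+1] =
  (Bs R V r (f s) [seq f i | i <- iota s.+1 N] + (r (f (s + N).+1) != r (f (s + N))))%N.
Proof.
elim: N s => [|N IH] s; first by rewrite /= addn0 addn0.
transitivity ((r (f s.+1) != r (f s)) +
   Bs R V r (f s.+1) [seq f i | i <- iota s.+2 N.+1])%N; first by [].
by rewrite IH addnA -addSnnS.
Qed.

Definition bf (R : realType) (V : finType) (r : V -> R) (f : nat -> V) N :=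
  Bs R V r (f 0%N) [seq f i | i <- iota 1 N].

Lemma bfS (R : realType) (V : finType) (r : V -> R) (f : nat -> V) N :
  bf R V r f N.+1 = (bf R V r f N + (r (f N.+1) != r (f N)))%N.
Proof. by rewrite /bf Bs_shift. Qed.

Lemma bf_mono (R : realType) (V : finType) (r : V -> R) (f : nat -> V) N M :
  (N <= M)%N -> (bf R V r f N <= bf R V r f M)%N.
Proof.
move/subnK <-; elim: (M - N)%N => [|k IH] //=.
by rewrite addSn bfS (leq_trans IH) // leq_addr.
Qed.

Lemma many_changes (R : realType) (V : finType) (r : V -> R) (f : nat -> V) :
  (forall n, exists m, (n <= m)%N /\ r (f m.+1) != r (f m)) ->
  forall K, exists N, (K <= bf R V r f N)%N.
Proof.
move=> H; elim=> [|K [N HN]]; first by exists 0%N.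
have [m [Hm Hne]] := H N; exists m.+1.
rewrite bfS Hne addn1 ltnS (leq_trans HN) //; exact: bf_mono.
Qed.

Theorem proposition4 (R : realType) (V : finType) (G : stoch_game R V)
  (HG : wf_game G) (r : V -> R) (Hr : bellman G r)
  (i : bool) (s1 s2 : strategy V)
  (Hs1 : valid_strategy G Player1 s1) (Hs2 : valid_strategy G Player2 s2)
  (Hcls : if i then class_preserving G r Player1 s1
                else class_preserving G r Player2 s2)
  (v0 : V) (P : probability (play v0) R)
  (HP : induced_measure G s1 s2 v0 P) :
  measurable (eventually_trapped v0 r) /\ P (eventually_trapped v0 r) = 1%:E.
Proof.
set T := eventually_trapped v0 r.
have Tchar : forall f : play v0, T f <-> exists n, forall k, r (f (n + k)%N) = r (f n).
  move=> f; split.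
    case=> C /imsetP[v _ ->] [n Hn]; exists n => k.
    have := Hn (n + k)%N (leq_addr _ _); have := Hn n (leqnn _).
    by rewrite /rclass !inE => /eqP -> /eqP ->.
  case=> n Hn; exists (rclass r (f n)); first exact: imset_f.
  exists n => m Hm; rewrite /rclass inE -(subnKC Hm) Hn //.
have Tmeas : measurable T.
  have -> : T = \bigcup_n \bigcap_k [set f : play v0 |
      (fun p => r (nth v0 p (n + k)) == r (nth v0 p n)) (mkseq f (n + k).+1)].
    apply/seteqP; split => f.
      move/Tchar => [n Hn]; exists n => // k _.
      by rewrite /= !nth_mkseq ?Hn // ltnS // leq_addr.
    case=> n _ Hn; apply/Tchar; exists n => k; have := Hn k I.
    by rewrite /= !nth_mkseq ?ltnS ?leq_addr // => /eqP.
  apply: bigcupT_measurable => n; apply: bigcapT_measurable => k.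
  exact: (@prefix_event R V G s1 s2 v0 P HP _ (fun p => r (nth v0 p (n + k)) == r (nth v0 p n))).1.
split => //.
have HTc : P (~` T) = 0%E.
  have [g2 Hg2 Hg] := @gap _ _ r.
  have [c Hc] : exists c : R, forall h v,
      (owner G v = Player1 -> 0 <= (r v - c) * (r (s1 h v) - r v)) /\
      (owner G v = Player2 -> 0 <= (r v - c) * (r (s2 h v) - r v)).
    case: i Hcls => Hcl.
    - have [c Hc] := @lower_bound _ _ r; exists c => h v; split => E.
        by have := Hcl h v E; rewrite /rclass inE => /eqP ->; rewrite subrr mulr0.
      have := Hr v; rewrite E => -[Hle _].
      by apply: mulr_ge0; rewrite subr_ge0; [exact: Hc | exact: Hle _ (Hs2 h v E)].
    - have [c Hc] := @upper_bound _ _ r; exists c => h v; split => E.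
        have := Hr v; rewrite E => -[Hle _].
        by apply: mulr_le0; rewrite subr_le0; [exact: Hc | exact: Hle _ (Hs1 h v E)].
      by have := Hcl h v E; rewrite /rclass inE => /eqP ->; rewrite subrr mulr0.
  pose Y := fun v => (r v - c)^+2.
  have Hstep := @step _ _ G s1 s2 HG r Hr c Hc g2 Hg.
  have HY0 : forall v, 0 <= Y v := fun v => sqr_ge0 _.
  have HYb := @Ybound _ _ Y HY0.
  pose bnd := (\sum_u Y u) / g2.
  have HK : forall K : nat, (0 < K)%N -> (P (~` T) <= (bnd / K%:R)%:E)%E.
    move=> K HK0.
    pose Q := fun p : seq V => if p is x :: q then (K <= Bs R V r x q)%N else false.
    pose A := fun N => [set f : play v0 | Q (mkseq f N.+1)].
    have HAm : forall N, measurable (A N) :=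
      fun N => (@prefix_event R V G s1 s2 v0 P HP N.+1 Q).1.
    have HAP : forall N, (P (A N) <= (bnd / K%:R)%:E)%E.
      move=> N; rewrite (@prefix_event R V G s1 s2 v0 P HP N.+1 Q).2 (@prefix_sum _ _ G s1 s2 v0 N Q).
      rewrite lee_fin ler_pdivlMr ?ltr0n // mulrC.
      exact: (@bound _ _ G s1 s2 HG r Y g2 _ Hstep Hg2 HY0 HYb K [::] v0 N).
    have HUm : measurable (\bigcup_N A N) := bigcupT_measurable _ HAm.
    have Hmono : {homo A : n m / (n <= m)%N >-> (n <= m)%O}.
      move=> n m Hnm; apply/subsetPset => f /= H.
      exact: (leq_trans H (@bf_mono _ _ r f _ _ Hnm)).
    have Hsub : ~` T `<=` \bigcup_N A N.
      move=> f /= HnT.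
      have Hch : forall n, exists m, (n <= m)%N /\ r (f m.+1) != r (f m).
        move=> n; apply: contrapT => Hno; apply: HnT; apply/Tchar; exists n.
        elim=> [|k IH]; first by rewrite addn0.
        rewrite addnS; case: (boolP (r (f (n + k).+1) == r (f (n + k)))) => [/eqP -> //|Hne].
        by exfalso; apply: Hno; exists (n + k)%N; split => //; exact: leq_addr.
      by have [N HN] := @many_changes _ _ r f Hch K; exists N.
    apply: le_trans (le_measure _ _ _ Hsub) _.
    - by rewrite inE; apply: measurableC.
    - by rewrite inE.
    have Hcv := @nondecreasing_cvg_mu _ _ R P A HAm HUm Hmono.
    apply: (@le_trans _ _ (lim ((P \o A) x @[x --> \oo]))).
      by rewrite (cvg_lim _ Hcv).
    apply: lime_le; first by apply/cvg_ex; eexists; exact: Hcv.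
    by apply: nearW => N; exact: HAP.
  have H1 := HK 1%N isT.
  have H0 : (0 <= P (~` T))%E by apply: measure_ge0.
  move: (P (~` T)) H0 HK H1 => x.
  case: x => [x| |] H0 HKx H1 //.
  congr (_%:E); rewrite lee_fin in H0.
  apply/eqP; rewrite eq_le H0 andbT; apply/negP => /negP; rewrite -ltNge => Hx.
  pose K := (Num.Def.truncn (bnd / x)).+1.
  have := HKx K isT; rewrite lee_fin ler_pdivlMr ?ltr0n // => HxK.
  have := truncnS_gt (bnd / x); rewrite -/K ltr_pdivrMr // => Hb.
  have : x * K%:R < K%:R * x by apply: le_lt_trans HxK Hb.
  by rewrite mulrC ltxx.
have E : P (T `|` ~` T) = (P T + P (~` T))%E.
  by apply: measureU => //; [exact: measurableC | exact: setICr].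
by move: E; rewrite setUv HTc adde0 probability_setT.
Qed.
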